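(* Let $G$ be a word-representable graph. Then $l(G \circ K_2) \le 2\,l(G) + \kappa_G$, where $\kappa_G$ is the size of a maximum clique of $G$.
   Context: All graphs are simple and undirected. Letters $x,y$ alternate in a word $w$ if deleting all other letters from $w$ yields $xyxy\ldots$ or $yxyx\ldots$ (of either parity). A word $w$ over $V(G)$ represents $G$ if every vertex occurs in $w$ and for all distinct $x,y$, $xy\in E(G)$ iff $x,y$ alternate in $w$; $G$ is word-representable if such a word exists, and $l(G)$ is the minimum length of a word representing $G$. For a graph $G$ and a rooted graph $H$ (a graph with a distinguished root vertex), the rooted product $G\circ H$ is obtained by taking $|V(G)|$ disjoint copies of $H$, one for each vertex $v$ of $G$, and identifying each vertex $v$ of $G$ with the root of its copy of $H$. Here $K_2$ is rooted at one of its vertices. *)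

(* Defs.v *)
From mathcomp Require Import all_boot.
From Stdlib Require Import ClassicalDescription.
Set Implicit Arguments. Unset Strict Implicit. Unset Printing Implicit Defensive.

Definition simple_graph (T : finType) (e : rel T) : Prop :=
  symmetric e /\ irreflexive e.

Definition alternate (T : eqType) (w : seq T) (x y : T) : Prop :=
  let s := [seq z <- w | (z == x) || (z == y)] in
  exists k, s = mkseq (fun i => if odd i then y else x) k \/
            s = mkseq (fun i => if odd i then x else y) k.

Definition represents (T : finType) (e : rel T) (w : seq T) : Prop :=
  (forall v : T, v \in w) /\
  (forall x y : T, x != y -> (e x y <-> alternate w x y)).

Definition word_representable (T : finType) (e : rel T) : Prop :=
  exists w : seq T, represents e w.

Definition rep_length (T : finType) (e : rel T) (n : nat) : Prop :=
  exists w : seq T, represents e w /\ size w = n.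

Definition rep_length_b (T : finType) (e : rel T) : pred nat :=
  fun n => if excluded_middle_informative (rep_length e n) then true else false.

Lemma rep_length_b_ex (T : finType) (e : rel T) :
  word_representable e -> exists n, rep_length_b e n.
Proof.
move=> [w Hw]; exists (size w); rewrite /rep_length_b.
case: excluded_middle_informative => // H; exfalso; apply: H; by exists w.
Qed.

(* l(G): minimum length of a word representing G (0 by convention if G is
   not word-representable; only used for word-representable graphs). *)
Definition l_rep (T : finType) (e : rel T) : nat :=
  match excluded_middle_informative (word_representable e) with
  | left H => ex_minn (rep_length_b_ex H)
  | right _ => 0
  end.

Definition is_clique (T : finType) (e : rel T) (A : {set T}) : bool :=
  [forall x in A, forall y in A, (x != y) ==> e x y].

Definition clique_number (T : finType) (e : rel T) : nat :=
  \max_(A : {set T} | is_clique e A) #|A|.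

(* Rooted product G o K_2 (K_2 rooted at one vertex): vertex set T + T,
   where inl v is the vertex v of G and inr v is the pendant vertex
   attached to v. *)
Definition rooted_K2 (T : finType) (e : rel T) : rel (T + T) :=
  fun a b => match a, b with
  | inl x, inl y => e x y
  | inl x, inr y => x == y
  | inr x, inl y => x == y
  | inr _, inr _ => false
  end.

(* Main.v *)
Require Import Defs.
From Stdlib Require Import ClassicalDescription.
From mathcomp Require Import all_boot zify.
Set Implicit Arguments. Unset Strict Implicit. Unset Printing Implicit Defensive.

Fixpoint alt (A : Type) (a b : A) (n : nat) : seq A :=
  if n is n'.+1 then a :: alt b a n' else [::].

Lemma map_iota_alt (A : Type) (a b : A) n m :
  map (fun i => if odd i then b else a) (iota m n) =
  if odd m then alt b a n else alt a b n.
Proof.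
elim: n m => [|n IH] m /=; first by case: odd.
rewrite IH /=; by case: (odd m).
Qed.

Lemma alt_mkseq (A : Type) (a b : A) n :
  mkseq (fun i => if odd i then b else a) n = alt a b n.
Proof. by rewrite /mkseq map_iota_alt. Qed.

Lemma alternateE (T : eqType) (w : seq T) x y :
  alternate w x y <-> exists k, [seq z <- w | (z == x) || (z == y)] = alt x y k
                         \/ [seq z <- w | (z == x) || (z == y)] = alt y x k.
Proof.
rewrite /alternate; split => -[k H]; exists k; by rewrite -!alt_mkseq in H *.
Qed.

Lemma alt_double (A : Type) (a b z : A) n s1 s2 :
  alt a b n = s1 ++ z :: z :: s2 -> a = b.
Proof.
elim: n a b s1 => [|n IH] a b [|c s1] //=.
- move=> [-> ]; case: n {IH} => //= n [-> ] //.
- by move=> [_ H]; symmetry; apply: IH H.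
Qed.

Lemma map_alt (A B : Type) (f : A -> B) a b n :
  map f (alt a b n) = alt (f a) (f b) n.
Proof. by elim: n a b => [|n IH] a b //=; rewrite IH. Qed.

Fixpoint build (T : eqType) (p s : seq T) : seq (T + T) :=
  if s is a :: s' then
    (if a \in p then [::] else [:: inr a]) ++ inl a ::
    (if (a \notin p) || (a \in s') then [:: inr a] else [::]) ++ build (a :: p) s'
  else [::].

Lemma filter_build_skip (T : eqType) (P : pred (T + T)) p a s :
  P (inl a) = false -> P (inr a) = false ->
  filter P (build p (a :: s)) = filter P (build (a :: p) s).
Proof.
move=> h1 h2 /=; rewrite filter_cat /= h1 filter_cat.
by case: (a \in p); case: (_ || _); rewrite /= ?h2.
Qed.

Lemma build_infix (T : eqType) (x : T) s p : x \in s -> x \notin p ->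
  exists A B, build p s = A ++ [:: inr x; inl x; inr x] ++ B.
Proof.
elim: s p => [|a s IH] p //=; rewrite in_cons.
have [<- _ xp|nax /= xs xp] := eqVneq x a.
  exists [::], (build (x :: p) s); by rewrite (negbTE xp).
have [|A [B ->]] := IH (a :: p) xs; first by rewrite in_cons negb_or nax.
exists ((if a \in p then [::] else [:: inr a]) ++ inl a ::
    (if (a \notin p) || (a \in s) then [:: inr a] else [::]) ++ A), B.
by rewrite -!catA /= -!catA.
Qed.

Lemma eqLL (T : eqType) (a b : T) : (inl a == inl b :> T + T) = (a == b). Proof. by []. Qed.
Lemma eqRR (T : eqType) (a b : T) : (inr a == inr b :> T + T) = (a == b). Proof. by []. Qed.
Lemma eqLR (T : eqType) (a b : T) : (inl a == inr b :> T + T) = false. Proof. by []. Qed.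
Lemma eqRL (T : eqType) (a b : T) : (inr a == inl b :> T + T) = false. Proof. by []. Qed.
Definition eqS := (eqLL, eqRR, eqLR, eqRL).

Definition xl (T : eqType) (x : T) : pred (T + T) :=
  fun z => (z == inl x) || (z == inr x).
Arguments xl : simpl never.
Lemma xlL (T : eqType) (x a : T) : xl x (inl a) = (a == x).
Proof. by rewrite /xl !eqS orbF. Qed.
Lemma xlR (T : eqType) (x a : T) : xl x (inr a) = (a == x).
Proof. by rewrite /xl !eqS. Qed.

Lemma build_notin (T : eqType) (x : T) s p : x \notin s ->
  filter (xl x) (build p s) = [::].
Proof.
elim: s p => [|a s IH] p //=; rewrite in_cons negb_or => /andP[xa xs].
by rewrite filter_build_skip ?IH // ?xlL ?xlR eq_sym (negbTE xa).
Qed.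

Lemma build_seen (T : eqType) (x : T) s p : x \in p ->
  exists n, filter (xl x) (build p s) = alt (inl x) (inr x) n /\ (x \notin s -> n = 0).
Proof.
elim: s p => [|a s IH] p xp; first by exists 0.
have [eax|nax] := eqVneq a x.
  subst a. rewrite /= xp /= filter_cat /= xlL eqxx.
  case xs: (x \in s).
    have [n [-> _]] := IH (x :: p) (mem_head _ _).
    by exists n.+2; rewrite /= xlR eqxx; split => //; rewrite in_cons eqxx.
  exists 1; rewrite build_notin ?xs //=; split => //; by rewrite in_cons eqxx.
rewrite (@filter_build_skip T (xl x) p a s) ?xlL ?xlR ?(negbTE nax) //.
have xap : x \in a :: p by rewrite in_cons xp orbT.
have [n [H1 H2]] := IH (a :: p) xap.
exists n; split => //; rewrite in_cons negb_or => /andP[_]; exact: H2.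
Qed.


Lemma build_first (T : eqType) (x : T) s p : x \in s -> x \notin p ->
  exists n, filter (xl x) (build p s) = alt (inr x) (inl x) n.
Proof.
elim: s p => [|a s IH] p //.
have [eax _ xp|nax] := eqVneq a x.
  subst a. rewrite /= (negbTE xp) /= xlR xlL eqxx.
  have [n [-> _]] := build_seen s (mem_head x p).
  by exists n.+3.
rewrite in_cons eq_sym (negbTE nax) /= => xs xp.
rewrite (@filter_build_skip T (xl x) p a s) ?xlL ?xlR ?(negbTE nax) //.
apply: IH => //; by rewrite in_cons negb_or eq_sym nax.
Qed.

Lemma build_inl (T : eqType) (x y : T) s p :
  filter (fun z => (z == inl x) || (z == inl y)) (build p s) =
  map inl (filter (fun z => (z == x) || (z == y)) s).
Proof.
elim: s p => [|a s IH] p //=.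
rewrite filter_cat /= filter_cat IH !eqS.
case: (a \in p); case: (_ || _); rewrite /= ?eqS //=;
by case: ifP.
Qed.

Definition F (b : bool) (k : nat) : nat := if b then (2 * k).-1 else 2 * k + (k == 1).

Lemma build_size (T : finType) (s p : seq T) :
  size (build p s) = \sum_(x : T) F (x \in p) (count_mem x s).
Proof.
elim: s p => [|a s IH] p /=.
  by rewrite big1 // => x _; rewrite /F; case: (x \in p).
rewrite size_cat /= size_cat IH (bigD1 a) //= [in RHS](bigD1 a) //=.
have -> : \sum_(i | i != a) F (i \in a :: p) (count_mem i s) =
          \sum_(i | i != a) F (i \in p) ((a == i) + count_mem i s).
  by apply: eq_bigr => i /negbTE ia; rewrite in_cons ia eq_sym ia.
rewrite mem_head eqxx.
have -> : (a \in s) = (0 < count_mem a s) by rewrite -has_pred1 has_count.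
set S := \sum_(i | _) _.
case: (a \in p); case: (count_mem a s) => [|k]; rewrite /F /=; lia.
Qed.

Lemma sum_count (T : finType) (s : seq T) : \sum_(x : T) count_mem x s = size s.
Proof.
elim: s => [|a s IH] /=; first by rewrite big1.
rewrite big_split /= IH (bigD1 a) //= eqxx big1 // => x /negbTE xa.
by rewrite eq_sym xa.
Qed.

Lemma build_size0 (T : finType) (w : seq T) :
  size (build [::] w) = 2 * size w + #|[set x | count_mem x w == 1]|.
Proof.
rewrite build_size /F /= big_split /= -sum_count big_distrr /=.
congr (_ + _); rewrite -sum1dep_card [RHS]big_mkcond /=.
by apply: eq_bigr => x _; case: (_ == 1).
Qed.

Lemma alt_map_iff (A B : eqType) (f : A -> B) (finj : injective f) (s : seq A) x y :
  (exists k, map f s = alt (f x) (f y) k \/ map f s = alt (f y) (f x) k) <->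
  (exists k, s = alt x y k \/ s = alt y x k).
Proof.
split => -[k H]; exists k; rewrite -!map_alt in H *.
  by case: H => /(inj_map finj) ->; [left|right].
by case: H => ->; [left|right].
Qed.

Lemma nonalt (T : eqType) (W : seq (T + T)) x v :
  (exists A B, W = A ++ [:: inr x; inl x; inr x] ++ B) ->
  v != inr x -> v != inl x -> ~ alternate W (inr x) v /\ ~ alternate W v (inr x).
Proof.
move=> [A [B ->]] vr vl.
have vr' : (inr x == v) = false by rewrite eq_sym (negbTE vr).
have vl' : (inl x == v) = false by rewrite eq_sym (negbTE vl).
split => /alternateE [k H]; rewrite !filter_cat /= ?eqxx ?vr' ?vl' ?eqS ?orbT /= in H;
  case: H => H; have E := alt_double (esym H); by move: vr; rewrite E eqxx.
Qed.

Lemma clique_singles (T : finType) (e : rel T) (w : seq T) :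
  represents e w -> is_clique e [set x | count_mem x w == 1].
Proof.
move=> [_ Hw]; apply/forallP => x; apply/implyP; rewrite inE => /eqP cx.
apply/forallP => y; apply/implyP; rewrite inE => /eqP cy; apply/implyP => xy.
apply/(Hw x y xy)/alternateE.
set f := [seq z <- w | (z == x) || (z == y)].
have fx : count_mem x f = 1.
  by rewrite /f count_filter -cx; apply: eq_count => z /=; case: (z == x).
have fy : count_mem y f = 1.
  by rewrite /f count_filter -cy; apply: eq_count => z /=; case: (z == y); rewrite ?orbT ?andbF.
have fm : forall z, z \in f -> (z == x) || (z == y) by move=> z; rewrite mem_filter => /andP[].
exists 2.
case: f fx fy fm => [|a [|b [|c t]]] //=.
all: move=> h1 h2 h3; have yx : (y == x) = false by rewrite eq_sym (negbTE xy).
all: have xy' := negbTE xy.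
- have /orP[/eqP ea|/eqP ea] := h3 a (mem_head _ _); subst a;
    move: h1 h2; rewrite ?eqxx ?xy' ?yx //.
- have /orP[/eqP ea|/eqP ea] := h3 a (mem_head _ _);
  have /orP[/eqP eb|/eqP eb] := h3 b ltac:(by rewrite !inE eqxx orbT); subst a b;
    move: h1 h2; rewrite ?eqxx ?xy' ?yx //; by [left|right].
- have /orP[/eqP ea|/eqP ea] := h3 a (mem_head _ _);
  have /orP[/eqP eb|/eqP eb] := h3 b ltac:(by rewrite !inE eqxx orbT);
  have /orP[/eqP ec|/eqP ec] := h3 c ltac:(by rewrite !inE eqxx !orbT); subst a b c;
    move: h1 h2; rewrite ?eqxx ?xy' ?yx /=; lia.
Qed.

Lemma build_represents (T : finType) (e : rel T) (w : seq T) :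
  represents e w -> represents (rooted_K2 e) (build [::] w).
Proof.
move=> [Hin Hw]; split.
  case=> x; have [A [B ->]] := build_infix (Hin x) (negbT (in_nil x));
  by rewrite !(mem_cat, inE) eqxx ?orbT.
have inf : forall x, exists A B, build [::] w = A ++ [:: inr x; inl x; inr x] ++ B.
  by move=> x; apply: build_infix.
case=> [x|x] [y|y] /= neq.
- rewrite eqLL in neq; rewrite (Hw x y neq) !alternateE build_inl.
  by rewrite (alt_map_iff (@inl_inj T T)).
- have [exy|nxy] := eqVneq x y; first subst y.
    split => // _; apply/alternateE.
    have [n H] := build_first (Hin x) (negbT (in_nil x)); exists n; right; exact: H.
  have hv : inl x != inl y :> T + T by rewrite eqLL.
  split => // H; have [_ H2] := @nonalt T _ y (inl x) (inf y) isT hv;  by case: (H2 H).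
- have [exy|nxy] := eqVneq x y; first subst y.
    split => // _; apply/alternateE.
    have [n H] := build_first (Hin x) (negbT (in_nil x)); exists n; left.
    by rewrite -H; apply: eq_filter => z; rewrite /xl orbC.
  have hv : inl y != inl x :> T + T by rewrite eqLL eq_sym.
  split => // H; have [H2 _] := @nonalt T _ x (inl y) (inf x) isT hv;  by case: (H2 H).
- rewrite eqRR in neq.
  have hv : inr y != inr x :> T + T by rewrite eqRR eq_sym.
  split => // H; have [H2 _] := @nonalt T _ x (inr y) (inf x) hv isT;  by case: (H2 H).
Qed.

Theorem mainTheorem9 (T : finType) (e : rel T) :
  simple_graph e -> word_representable e ->
  word_representable (rooted_K2 e) /\
  l_rep (rooted_K2 e) <= 2 * l_rep e + clique_number e.
Proof.
move=> _ Hwr.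
have [w [Hw Hs]] : exists w, represents e w /\ size w = l_rep e.
  rewrite /l_rep; case: excluded_middle_informative => // H.
  case: ex_minnP => n Hn _; move: Hn; rewrite /rep_length_b.
  by case: excluded_middle_informative.
have Hr := build_represents Hw.
have Hwr2 : word_representable (rooted_K2 e) by exists (build [::] w).
split => //.
have h1 : l_rep (rooted_K2 e) <= size (build [::] w).
  rewrite /l_rep; case: excluded_middle_informative => // H.
  case: ex_minnP => m _ Hmin; apply: Hmin; rewrite /rep_length_b.
  case: excluded_middle_informative => // H'; exfalso; apply: H'; by exists (build [::] w).
apply: (leq_trans h1); rewrite build_size0 Hs leq_add2l /clique_number.
exact: (@leq_bigmax_cond _ (is_clique e) (fun A : {set T} => #|A|) _ (clique_singles Hw)).
Qed.
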